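(* Let $\mathscr{C}$ be a graph class containing all trees. Then for every real $\alpha\ge1$, no algorithm is a $0$-uniform $\alpha$-approximation for Minimum Dominating Set on $\mathscr{C}$; that is, there is no map $\mathsf{A}$ assigning to each $G\in\mathscr{C}$ a dominating set $\mathsf{A}(G)$ with $|\mathsf{A}(G)|\le\alpha\,\mathrm{MDS}(G)$ such that $|\mathsf{A}(G)\cap S|\le\alpha\,\mathrm{MDS}(G,S)$ for all $G\in\mathscr{C}$ and $S\subseteq V(G)$.
   Context: $\mathrm{MDS}(G,S)$ is the minimum size of a set $X\subseteq V(G)$ such that every vertex of $S$ is in $X$ or adjacent to a vertex of $X$; $\mathrm{MDS}(G)=\mathrm{MDS}(G,V(G))$. *)

(* Defs.v *)
From HB Require Import structures.
From mathcomp Require Import all_boot all_order all_algebra.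
From mathcomp Require Import reals.
Set Implicit Arguments. Unset Strict Implicit. Unset Printing Implicit Defensive.

Record graph := Graph {
  gn : nat;
  gadj : rel 'I_gn;
  gsym : symmetric gadj;
  girr : irreflexive gadj }.

Definition V (G : graph) := 'I_(gn G).

Definition dominates (G : graph) (X S : {set 'I_(gn G)}) : bool :=
  [forall v in S, (v \in X) || [exists u in X, gadj u v]].

Definition dominating_set (G : graph) (X : {set 'I_(gn G)}) : bool :=
  dominates X [set: 'I_(gn G)].

(* MDS(G,S): minimum size of a set X dominating S (V(G) itself dominates S,
   so the default value gn G = #|V(G)| never exceeds the true minimum). *)
Definition MDS_on (G : graph) (S : {set 'I_(gn G)}) : nat :=
  \big[minn/gn G]_(X : {set 'I_(gn G)} | dominates X S) #|X|.

Definition MDS (G : graph) : nat := MDS_on [set: 'I_(gn G)].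

Definition connected_graph (G : graph) : Prop :=
  forall x y : 'I_(gn G), connect (gadj (g:=G)) x y.

Definition acyclic (G : graph) : Prop :=
  forall p : seq 'I_(gn G), uniq p -> 3 <= size p -> ~~ cycle (gadj (g:=G)) p.

Definition is_tree (G : graph) : Prop :=
  0 < gn G /\ connected_graph G /\ acyclic G.

(* Main.v *)
Require Import Defs.
From mathcomp Require Import all_boot all_order all_algebra.
From mathcomp Require Import reals zify lra.
Import Order.TTheory GRing.Theory Num.Theory.


Lemma MDS_on_le (G : graph) (S X : {set 'I_(gn G)}) :
  dominates X S -> (MDS_on S <= #|X|)%N.
Proof.
move=> hX; rewrite /MDS_on; have := mem_index_enum X.
elim: (index_enum _) => // i s IH; rewrite inE big_cons => /orP[/eqP<-|/IH h].
  by rewrite hX geq_minl.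
by case: ifP => _ //; exact: leq_trans (geq_minr _ _) h.
Qed.

Section PT.
Variable n : nat.
Variable par : nat -> nat.
Definition padj (u v : 'I_n) : bool :=
  [&& 0 < val v, par v < v & val u == par v] ||
  [&& 0 < val u, par u < u & val v == par u].
Lemma padj_sym : symmetric padj.
Proof. by move=> u v; rewrite /padj orbC. Qed.
Lemma padj_irr : irreflexive padj.
Proof. move=> u; rewrite /padj orbb; apply/negP => /and3P[_ h /eqP e]. move: h e => /=; lia. Qed.
Definition PT := Graph padj_sym padj_irr.

Lemma PT_acyclic : acyclic PT.
Proof.
move=> p up sp; apply/negP => cp.
have p0 : p != [::] by case: p sp {up cp}.
case: p p0 up sp cp => // a p0' _.
set p := a :: p0'.
move=> up sp cp.
have ap : a \in p by rewrite inE eqxx.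
case: (@arg_maxnP _ a (fun i => i \in p) (fun i => val i) ap) => x xp xmax.
have := rot_index xp; set q := drop _ _ ++ _ => hr.
have cq : cycle padj (x :: q) by rewrite -hr rot_cycle.
have uq : uniq (x :: q) by rewrite -hr rot_uniq.
have sq : 3 <= size (x :: q) by rewrite -hr size_rot.
have mq : forall i, i \in x :: q -> val i <= val x.
  by move=> i; rewrite -hr mem_rot => /xmax.
case: q cq uq sq mq {hr} => [|y [|w r]] // cq uq _ mq.
rewrite /= rcons_path in cq; case/and4P: cq => exy _ _ ezx.
set z := last w r in ezx.
have zin : z \in w :: r by apply: mem_last.
have yz : y != z.
  by move: uq => /= /and3P[_ hy _]; apply: contraNneq hy => ->.
have hy : val y < val x.
  have : val y <= val x by apply: mq; rewrite !inE eqxx orbT.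
  rewrite leq_eqVlt => /orP[/eqP/val_inj e|//].
  by move: uq; rewrite /= e !inE eqxx.
have hz : val z < val x.
  have : val z <= val x by apply: mq; rewrite (in_cons x) (in_cons y) zin !orbT.
  rewrite leq_eqVlt => /orP[/eqP/val_inj e|//].
  by move: uq => /= /andP[]; rewrite (in_cons y) -e zin orbT.
move: exy ezx; rewrite /= /padj.
case/orP=> /and3P[_ h1 /eqP e1]; first by move: hy h1 e1 => /=; lia.
case/orP=> /and3P[_ h2 /eqP e2]; last by move: hz h2 e2 => /=; lia.
by move: yz; rewrite -(inj_eq val_inj) e1 e2 eqxx.
Qed.
End PT.

Lemma PT_connected n (par : nat -> nat) (hp : forall v : 'I_n, 0 < val v -> par v < v) :
  connected_graph (PT n par).
Proof.
move=> x y.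
suff H : forall (z : 'I_n) v, val z = 0 -> connect (padj n par) z v.
  have z0 : 'I_n := x.
  have e : val (Ordinal (leq_ltn_trans (leq0n x) (ltn_ord x))) = 0 by [].
  apply: connect_trans (_ : connect _ _ (Ordinal (leq_ltn_trans (leq0n x) (ltn_ord x)))) _.
    by rewrite (sym_connect_sym (@padj_sym n par)); apply: H.
  by apply: H.
move=> z v z0.
elim: {v}(val v) {-2}v (leqnn (val v)) => [|m IH] v hv.
  have -> : v = z by apply: val_inj; rewrite z0; move: hv; case: (val v).
  exact: connect0.
case: (posnP (val v)) => [v0|vp].
  have -> : v = z by apply: val_inj; rewrite z0 v0.
  exact: connect0.
have hpv := hp v vp.
have pn : par v < n by apply: ltn_trans hpv (ltn_ord v).
apply: connect_trans (IH (Ordinal pn) _) _ => /=; first by move: hv hpv => /=; lia.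
by apply: connect1; rewrite /padj /= vp hpv eqxx.
Qed.

Section Conc.
Variable N : nat.
Hypothesis N0 : 0 < N.
Definition cpar (v : nat) : nat := if v <= N then 0 else (v - N.+1) %/ N + 1.
Definition cn := (N + N * N).+1.
Definition CG := PT cn cpar.

Lemma cpar_lt v : 0 < v -> cpar v < v.
Proof.
rewrite /cpar => vp; case: (leqP v N) => // h.
have := leq_div (v - N.+1) N; move: ((v - N.+1) %/ N) => q; lia.
Qed.

Lemma cpar_le v : v < cn -> cpar v <= N.
Proof.
rewrite /cpar => h2; case: (leqP v N) => // h1.
suff : (v - N.+1) %/ N < N by lia.
rewrite ltn_divLR //; move: h2; rewrite /cn; nia.
Qed.

Lemma CG_tree : is_tree CG.
Proof.
split; first by [].
split; last exact: PT_acyclic.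
apply: PT_connected => v; exact: cpar_lt.
Qed.

Definition cu (i : 'I_N) : 'I_cn := inord i.+1.
Lemma cuE i : (cu i : nat) = i.+1.
Proof. rewrite /cu inordK //; have := ltn_ord i; rewrite /cn; nia. Qed.
Definition leaf (p : 'I_N * 'I_N) : 'I_cn := inord (N.+1 + p.1 * N + p.2).
Lemma leafE p : (leaf p : nat) = N.+1 + p.1 * N + p.2.
Proof.
rewrite /leaf inordK //; case: p => [i j] /=; have := ltn_ord i; have := ltn_ord j.
rewrite /cn; nia.
Qed.
Lemma cpar_leaf (p : 'I_N * 'I_N) : cpar (N.+1 + p.1 * N + p.2) = p.1.+1.
Proof.
rewrite /cpar ifN; last by lia.
have -> : N.+1 + p.1 * N + p.2 - N.+1 = p.1 * N + p.2 by lia.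
by rewrite divnMDl // divn_small // addn0 addn1.
Qed.
Lemma leaf_inj : injective leaf.
Proof.
move=> [i j] [k l] /(congr1 val) /=; rewrite !leafE /= => e.
have e' : i * N + j = k * N + l by lia.
have ei : i = k :> nat.
  by have := congr1 (divn^~ N) e'; rewrite !divnMDl // !divn_small // !addn0.
have ej : j = l :> nat by move: e'; rewrite ei; lia.
by congr pair; apply: val_inj.
Qed.
Lemma cu_inj : injective cu.
Proof. by move=> i j /(congr1 val) /=; rewrite !cuE => -[e]; apply: val_inj. Qed.
End Conc.

Lemma cu_surj N (N0 : 0 < N) k : 0 < k -> k <= N -> exists i : 'I_N, (cu N i : nat) = k.
Proof.
move=> k0 kN; have hk : k.-1 < N by lia.
by exists (Ordinal hk); rewrite (@cuE N N0) /=; lia.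
Qed.

Lemma key N (N0 : 0 < N) (D : {set 'I_(gn (CG N))}) :
  dominating_set D ->
  [/\ (MDS (CG N) <= N)%N,
      (MDS_on (G := CG N) [set cu N i | i : 'I_N] <= 1)%N &
      exists k, (k * N <= #|D|)%N /\ (N <= k + #|D :&: [set cu N i | i : 'I_N]|)%N].
Proof.
move=> domD.
set U : {set 'I_(gn (CG N))} := [set cu N i | i : 'I_N].
split.
- apply: leq_trans (@MDS_on_le _ _ U _) _; last first.
    by apply: leq_trans (leq_imset_card _ _) _; rewrite card_ord.
  apply/forallP => v; apply/implyP => _.
  case: (posnP (v : nat)) => [v0|vp].
    apply/orP; right; apply/existsP; exists (cu N (Ordinal N0)).
    rewrite imset_f //=; rewrite /padj /= !(@cuE N N0) /= v0 /cpar N0 /= //.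
  case: (leqP (v : nat) N) => [vN|vN].
    have [i hi] := (@cu_surj N N0 _) vp vN.
    apply/orP; left; have -> : v = cu N i by apply: val_inj; rewrite /= hi.
    exact: imset_f.
  have hle := (@cpar_le N N0 _) (ltn_ord v).
  have hpos : 0 < cpar N v by rewrite /cpar; case: (leqP (v : nat) N) vN => // _ _; rewrite addn1.
  have [i hi] := (@cu_surj N N0 _) hpos hle.
  apply/orP; right; apply/existsP; exists (cu N i).
  rewrite imset_f //= /padj /=; apply/orP; left; apply/and3P; split; [exact: vp | exact: cpar_lt | exact/eqP].
- pose z : 'I_(gn (CG N)) := Ordinal (n := cn N) (m := 0) erefl.
  apply: leq_trans (@MDS_on_le _ _ [set z] _) _; last by rewrite cards1.
  apply/forallP => v; apply/implyP => /imsetP[i _ ->].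
  apply/orP; right; apply/existsP; exists z; rewrite inE eqxx /=.
  rewrite /padj /= (@cuE N N0) /= cpar_lt //=.
  by rewrite /cpar; have := ltn_ord i; case: leqP => //; lia.
- set I' := [set i : 'I_N | cu N i \notin D].
  exists #|I'|; split.
    have <- : #|leaf N @: setX I' [set: 'I_N]| = (#|I'| * N)%N.
      by rewrite card_imset; [rewrite cardsX cardsT card_ord | exact: leaf_inj].
    apply: subset_leq_card; apply/subsetP => _ /imsetP[[i j] /setXP[hi _] ->].
    move: hi; rewrite inE => hi.
    move/forallP: domD => /(_ (leaf N (i, j))); rewrite in_setT /= => /orP[//|].
    case/existsP => w /andP[wD]; rewrite /padj.
    case/orP => /and3P[_ h1 /eqP e1].
      move: e1; rewrite (@leafE N N0) (@cpar_leaf N N0) /= => e1.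
      have ew : w = cu N i by apply: val_inj; rewrite /= (@cuE N N0).
      by move: hi; rewrite -ew wD.
    move: e1 => /=; rewrite (@leafE N N0) => e1; have := (@cpar_le N N0 _) (ltn_ord w); lia.
  have h1 : #|cu N @: ~: I'| <= #|D :&: U|.
    apply: subset_leq_card; apply/subsetP => _ /imsetP[i hi ->].
    move: hi; rewrite !inE negbK => ->; exact: imset_f.
  move: h1; rewrite card_imset; last exact: cu_inj.
  have := cardsC I'; rewrite card_ord; lia.
Qed.
Local Open Scope ring_scope.

Theorem mainTheorem14 (R : realType) (C : graph -> Prop)
  (HC : forall G : graph, is_tree G -> C G)
  (alpha : R) (halpha : 1 <= alpha) :
  ~ exists A : forall G : graph, {set 'I_(gn G)},
      forall G : graph, C G ->
        [/\ dominating_set (A G),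
            (#|A G|%:R <= alpha * (MDS G)%:R) &
            forall S : {set 'I_(gn G)},
              #|A G :&: S|%:R <= alpha * (MDS_on S)%:R].
Proof.
case=> A HA.
have a0 : 0 <= alpha by lra.
pose N := (Num.bound (2 * alpha)).+1.
have N0 : (0 < N)%N by [].
have hN : 2 * alpha < N%:R.
  have := archi_boundP (x := 2 * alpha) ltac:(lra).
  rewrite /N -addn1 natrD; lra.
case: (HA (CG N) (HC _ (@CG_tree N N0))) => domD hD hS.
case: (@key N N0 _ domD) => hM hM1 [k [hk1 hk2]].
set U := [set cu N i | i : 'I_N] in hM1 hk2.
have hb := hS U.
have hb' : #|A (CG N) :&: U|%:R <= alpha.
  apply: le_trans hb _; rewrite -[X in _ <= X]mulr1; apply: ler_wpM2l => //.
  by rewrite -[1]/(1%:R) ler_nat.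
have hD' : #|A (CG N)|%:R <= alpha * N%:R.
  by apply: le_trans hD _; apply: ler_wpM2l => //; rewrite ler_nat.
have hk : k%:R * N%:R <= alpha * N%:R.
  by apply: le_trans hD'; rewrite -natrM ler_nat.
have Np : 0 < N%:R :> R by rewrite ltr0n.
rewrite ler_pM2r // in hk.
have : N%:R <= k%:R + #|A (CG N) :&: U|%:R :> R by rewrite -natrD ler_nat.
lra.
Qed.
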